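(* Let $p$ be a prime and $d>1$ an integer. Let $T_d$ be the $d$-th Chebyshev polynomial of the first kind, viewed as a self-map of $\mathbb{A}^1(\mathbb{F}_p)=\mathbb{F}_p$. Then $$\max_{x\in\mathbb{F}_p}t(T_d,x)=\max_q\left(\max\left(\left\lceil\frac{v_q(p-1)}{v_q(d)}\right\rceil,\left\lceil\frac{v_q(p+1)}{v_q(d)}\right\rceil\right)\right),$$ where $q$ ranges over the prime divisors of $d$ and $v_q$ is the $q$-adic valuation.
   Context: The $d$-th Chebyshev polynomial of the first kind $T_d\in\mathbb{Z}[z]$ is the monic degree-$d$ polynomial with $T_d(z+z^{-1})=z^d+z^{-d}$, reduced modulo $p$. For a self-map $f$ of a finite set and a point $x$, the tail $t(f,x)$ is the least integer $m\ge0$ such that $f^m(x)$ is periodic. *)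

(* Defs.v *)
From HB Require Import structures.
From mathcomp Require Import all_boot all_order all_algebra.
Set Implicit Arguments. Unset Strict Implicit. Unset Printing Implicit Defensive.
Import GRing.Theory.
Local Open Scope ring_scope.

(* Chebyshev polynomials of the first kind over Z, normalized so that
   T_d(z + z^-1) = z^d + z^-d : T_0 = 2, T_1 = X, T_{n+2} = X T_{n+1} - T_n. *)
Fixpoint cheb_pair (n : nat) : {poly int} * {poly int} :=
  match n with
  | 0%N => (2%:P, 'X)
  | n'.+1 => let (a, b) := cheb_pair n' in (b, 'X * b - a)
  end.

Definition cheb (d : nat) : {poly int} := (cheb_pair d).1.

Definition cheb_map (p d : nat) (x : 'F_p) : 'F_p :=
  (map_poly (fun z : int => z%:~R : 'F_p) (cheb d)).[x].

Arguments cheb_map p d x : clear implicits.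
Local Close Scope ring_scope.

Definition periodic_pt (T : Type) (f : T -> T) (y : T) : Prop :=
  exists n, 0 < n /\ iter n f y = y.

Definition is_tail (T : Type) (f : T -> T) (x : T) (m : nat) : Prop :=
  periodic_pt f (iter m f x) /\ forall k, k < m -> ~ periodic_pt f (iter k f x).

Definition ceil_div (a b : nat) : nat := (a + b.-1) %/ b.

Definition tail_bound (p d : nat) : nat :=
  \max_(q <- primes d)
     maxn (ceil_div (logn q (p - 1)) (logn q d))
          (ceil_div (logn q (p + 1)) (logn q d)).

Example cheb2 : cheb 2 = ('X * 'X - 2%:P)%R. Proof. by []. Qed.

(* Main.v *)
Require Import Defs.
From mathcomp Require Import all_boot all_order all_algebra all_fingroup all_solvable all_field.
From mathcomp Require Import ring zify.
Set Implicit Arguments. Unset Strict Implicit. Unset Printing Implicit Defensive.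
Import GRing.Theory FinRing.Theory.

Module P1.

Local Open Scope ring_scope.

Lemma cheb0 : cheb 0 = 2%:P. Proof. by []. Qed.
Lemma cheb1 : cheb 1 = 'X. Proof. by []. Qed.
Lemma chebSS n : cheb n.+2 = 'X * cheb n.+1 - cheb n.
Proof. by rewrite /cheb /=; case: (cheb_pair n). Qed.

Definition chebR (R : nzRingType) n : {poly R} := map_poly (fun z : int => z%:~R : R) (cheb n).

Lemma chebR_eval (L : fieldType) (z : L) n : z != 0 ->
  (chebR L n).[z + z^-1] = z ^+ n + z^-1 ^+ n.
Proof.
move=> nz.
have H : forall n, (chebR L n).[z + z^-1] = z ^+ n + z^-1 ^+ n /\
                   (chebR L n.+1).[z + z^-1] = z ^+ n.+1 + z^-1 ^+ n.+1.
  elim=> [|k [IH1 IH2]].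
    rewrite /chebR cheb0 cheb1 map_polyC map_polyX /= !hornerE.
    by split=> //; rewrite !expr0 !expr1 /=.
  split=> //.
  rewrite /chebR chebSS rmorphB rmorphM /= map_polyX hornerD hornerN mulrC hornerMX.
  rewrite -/(chebR L k.+1) -/(chebR L k) IH1 IH2.
  rewrite !exprS; field; rewrite nz //.
by case: (H n).
Qed.

End P1.
Import P1.

Module P2.

Local Open Scope ring_scope.

Lemma inv_sum_eq (L : fieldType) (a b : L) : a != 0 -> b != 0 ->
  a + a^-1 = b + b^-1 -> a = b \/ a * b = 1.
Proof.
move=> na nb h.
have: (a - b) * (a * b - 1) = 0.
  have -> : (a - b) * (a * b - 1) = a * b * ((a + a^-1) - (b + b^-1)).
    by field; rewrite na nb.
  by rewrite h subrr mulr0.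
move/eqP; rewrite mulf_eq0 !subr_eq0 => /orP[/eqP|/eqP]; tauto.
Qed.

Section Iter.
Variables (p d : nat) (L : fieldType) (phi : {rmorphism 'F_p -> L}).

Lemma phi_cheb y : phi (cheb_map p d y) = (chebR L d).[phi y].
Proof.
rewrite /cheb_map -horner_map /chebR -map_poly_comp.
congr (_.[_]); apply: eq_map_poly => c /=; exact: rmorph_int.
Qed.

Lemma phi_iter x z k : z != 0 -> phi x = z + z^-1 ->
  phi (iter k (cheb_map p d) x) = z ^+ (d ^ k)%N + z^-1 ^+ (d ^ k)%N.
Proof.
move=> nz hx; elim: k => [|k IH] /=; first by rewrite expn0 !expr1.
rewrite phi_cheb IH.
have nz' : z ^+ (d ^ k)%N != 0 by rewrite expf_neq0.
rewrite exprVn chebR_eval // !exprVn -!exprM expnS mulnC.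
done.
Qed.
End Iter.

End P2.
Import P2.

Module P3.

Local Open Scope ring_scope.

Section Per.
Variables (p d : nat) (L : fieldType) (phi : {rmorphism 'F_p -> L}).
Hypothesis hd : (0 < d)%N.
Variables (x : 'F_p) (z : L) (o : nat).
Hypothesis nz : z != 0.
Hypothesis hx : phi x = z + z^-1.
Hypothesis ho : forall m, (z ^+ m == 1) = (o %| m)%N.

Lemma periodic_iff k : periodic_pt (cheb_map p d) (iter k (cheb_map p d) x) <->
  exists n, (0 < n)%N /\ ((o %| d ^ k * (d ^ n - 1))%N \/ (o %| d ^ k * (d ^ n + 1))%N).
Proof.
have hoP : forall m, z ^+ m = 1 <-> (o %| m)%N.
  by move=> m; rewrite -ho; split=> [->|/eqP].
have hoE1 : forall m, z ^+ m = 1 -> (o %| m)%N by move=> m /hoP.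
have hoE2 : forall m, (o %| m)%N -> z ^+ m = 1 by move=> m /hoP.
have key : forall n, iter n (cheb_map p d) (iter k (cheb_map p d) x) = iter k (cheb_map p d) x
   <-> (o %| d ^ k * (d ^ n - 1))%N \/ (o %| d ^ k * (d ^ n + 1))%N.
  move=> n; rewrite -iterD.
  have E1 : (1 <= d ^ n)%N by rewrite expn_gt0 hd.
  set D := (d ^ k)%N; set E := (d ^ n)%N.
  have nzD : z ^+ D != 0 by rewrite expf_neq0.
  have eqa : z ^+ (d ^ (n + k))%N = z ^+ (D * (E - 1))%N * z ^+ D.
    by rewrite -exprD expnD /D /E; congr (_ ^+ _); rewrite mulnBr muln1 mulnC subnK // leq_pmulr.
  split.
    move=> /(congr1 phi); rewrite !(@phi_iter p d L phi x z _ nz hx) !exprVn.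
    move=> /(inv_sum_eq (expf_neq0 _ nz) nzD) [].
      move=> h; have /eqP := etrans (esym eqa) h; rewrite -{2}(mul1r (z ^+ D)) (inj_eq (mulIf nzD)).
      by move=> /eqP h'; left; apply: hoE1; exact: h'.
    move=> h; have := etrans (congr1 (fun t => t * z ^+ D) (esym eqa)) h.
    rewrite -mulrA -!exprD => h'; have {h'} := hoE1 _ h'.
    have -> : (D * (E - 1) + (D + D) = D * (E + 1))%N by have := leq_pmulr D E1; rewrite mulnDr mulnBr muln1; lia.
    tauto.
  move=> H; apply: (fmorph_inj phi); rewrite !(@phi_iter p d L phi x z _ nz hx) !exprVn.
  case: H => H.
    by rewrite eqa (hoE2 _ H) mul1r.
  have hab : z ^+ (d ^ (n + k))%N * z ^+ D = 1.
    rewrite eqa -mulrA -!exprD.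
    have -> : (D * (E - 1) + (D + D) = D * (E + 1))%N by have := leq_pmulr D E1; rewrite mulnDr mulnBr muln1; lia.
    exact: hoE2.
  have -> : (z ^+ (d ^ (n + k))%N)^-1 = z ^+ D.
    by rewrite -[LHS]mulr1 -hab mulrA mulVf ?mul1r // expf_neq0.
  have -> : (z ^+ D)^-1 = z ^+ (d ^ (n + k))%N.
    by rewrite -[LHS]mul1r -hab -mulrA mulfV ?mulr1.
  by rewrite addrC.
split.
  by move=> [n [n0 h]]; exists n; split=> //; apply/key.
by move=> [n [n0 h]]; exists n; split=> //; apply/key.
Qed.
End Per.

End P3.
Import P3.

Module P4.

Lemma ceil_div_le a b k : 0 < b -> (ceil_div a b <= k) = (a <= k * b).
Proof.
move=> b0; rewrite /ceil_div -ltnS ltn_divLR // mulSn.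
apply/idP/idP; lia.
Qed.

Lemma log_bound_aux q d o k e : prime q -> q %| d -> 0 < e -> ~~ (q %| e) ->
  o %| d ^ k * e -> 0 < d -> logn q o <= k * logn q d.
Proof.
move=> pq qd e0 nqe oe d0.
have de0 : 0 < d ^ k * e by rewrite muln_gt0 expn_gt0 d0 e0.
apply: leq_trans (dvdn_leq_log q de0 oe) _.
rewrite lognM ?expn_gt0 ?d0 // lognX.
have -> : logn q e = 0.
  apply/eqP; rewrite -leqn0 leqNgt logn_gt0 mem_primes pq e0 /=; exact: nqe.
by rewrite addn0.
Qed.

Lemma nt_iff d o k : 1 < d -> 0 < o ->
  (exists n, 0 < n /\ (o %| d ^ k * (d ^ n - 1) \/ o %| d ^ k * (d ^ n + 1))) <->
  (forall q, q \in primes d -> logn q o <= k * logn q d).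
Proof.
move=> d1 o0; have d0 : 0 < d by lia.
split.
  move=> [n [n0 H]] q; rewrite mem_primes => /and3P [pq _ qd].
  have qdn : q %| d ^ n by apply: dvdn_exp.
  have dn1 : d <= d ^ n by rewrite -{1}(expn1 d) leq_pexp2l.
  case: H => H.
    apply: (log_bound_aux pq qd _ _ H d0); first lia.
    rewrite -(dvdn_subr (_ : d ^ n - 1 <= d ^ n)) ?leq_subr //.
    have -> : d ^ n - (d ^ n - 1) = 1 by lia.
    by rewrite dvdn1; apply/eqP => q1; rewrite q1 in pq.
  apply: (log_bound_aux pq qd _ _ H d0); first lia.
  by rewrite dvdn_addr // dvdn1; apply/eqP => q1; rewrite q1 in pq.
move=> H.
pose pi := \pi(d).
pose u := o`_pi^'.
have u0 : 0 < u by apply: part_gt0.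
have cdu : coprime d u by apply: pnat_coprime (pnat_pi d0) (part_pnat _ _).
exists (totient u); split; first by rewrite totient_gt0.
left; rewrite -(partnC pi o0); apply: dvdn_mul.
  apply/(dvdn_partP _ (part_gt0 _ _)) => q qin.
  have qpi : q \in pi by apply: (pnatPpi (part_pnat _ _) qin).
  rewrite partn_part; last by move=> r; rewrite inE => /eqP ->.
  have pq : prime q by move: qpi; rewrite /pi /= mem_primes => /and3P [].
  rewrite p_part pfactor_dvdn ?expn_gt0 ?d0 // lognX.
  by apply: H.
rewrite -eqn_mod_dvd ?expn_gt0 ?d0 //.
by apply/eqP; apply: Euler_exp_totient.
Qed.

Definition Bo d o := \max_(q <- primes d) ceil_div (logn q o) (logn q d).

Lemma Bo_le d o k :
  (forall q, q \in primes d -> logn q o <= k * logn q d) <-> Bo d o <= k.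
Proof.
split.
  move=> H; apply/bigmax_leqP_seq => q qin _.
  rewrite ceil_div_le ?H // logn_gt0 //.
move=> /bigmax_leqP_seq H q qin.
have := H q qin isT; rewrite ceil_div_le // logn_gt0 //.
Qed.

End P4.
Import P4.

Module P5.

Local Open Scope ring_scope.

Lemma order_exists (L : fieldType) (z : L) N : (0 < N)%N -> z ^+ N = 1 ->
  exists o, (0 < o)%N /\ forall m, (z ^+ m == 1) = (o %| m)%N.
Proof.
move=> N0 zN.
have ex : exists n, (0 < n)%N && (z ^+ n == 1) by exists N; rewrite N0 zN eqxx.
case: (ex_minnP ex) => o /andP [o0 zo] omin.
exists o; split=> // m.
have em : z ^+ m = z ^+ (m %% o)%N.
  rewrite {1}(divn_eq m o) exprD mulnC exprM (eqP zo) expr1n mul1r //.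
rewrite em; apply/idP/idP.
  move=> h; rewrite /dvdn; apply/negPn/negP => hm.
  have hm' : (0 < m %% o)%N by rewrite lt0n.
  have := omin (m %% o)%N; rewrite hm' h => /(_ isT).
  rewrite leqNgt ltn_mod o0 //.
  by move=> /eqP ->; rewrite expr0.
Qed.

Section Tail.
Variables (p d : nat) (L : fieldType) (phi : {rmorphism 'F_p -> L}).
Hypothesis hd : (1 < d)%N.
Variables (x : 'F_p) (z : L) (o : nat).
Hypothesis nz : z != 0.
Hypothesis hx : phi x = z + z^-1.
Hypothesis o0 : (0 < o)%N.
Hypothesis ho : forall m, (z ^+ m == 1) = (o %| m)%N.

Lemma per_Bo k : periodic_pt (cheb_map p d) (iter k (cheb_map p d) x) <-> (Bo d o <= k)%N.
Proof.
have d0 : (0 < d)%N by apply: ltnW.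
rewrite (periodic_iff d0 nz hx ho) (nt_iff k hd o0); exact: Bo_le.
Qed.

Lemma tail_is_Bo : is_tail (cheb_map p d) x (Bo d o).
Proof.
split; first by apply/per_Bo.
by move=> k hk /per_Bo; rewrite leqNgt hk.
Qed.

Lemma tail_uniq m : is_tail (cheb_map p d) x m -> m = Bo d o.
Proof.
move=> [h1 h2]; move/per_Bo: h1 => h1.
apply/eqP; rewrite eqn_leq h1 andbT leqNgt; apply/negP => hlt.
by apply: (h2 _ hlt); apply/per_Bo.
Qed.
End Tail.

End P5.
Import P5.

Module P6.

Local Open Scope ring_scope.

Section Frob.
Variables (p : nat) (hp : prime p) (L : fieldType) (phi : {rmorphism 'F_p -> L}).

Lemma charL : p \in [pchar L].
Proof. exact: (@rmorph_pchar _ _ phi p (pchar_Fp hp)). Qed.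

Lemma frobD (a b : L) : (a + b) ^+ p = a ^+ p + b ^+ p.
Proof. by apply: exprDn_pchar; rewrite pnatE // charL. Qed.

Lemma fermat (a : 'F_p) : a ^+ p = a.
Proof. by have := expf_card a; rewrite card_Fp. Qed.

Lemma frob_z x z : z != 0 -> phi x = z + z^-1 -> z ^+ p.-1 = 1 \/ z ^+ p.+1 = 1.
Proof.
move=> nz hx.
have e : z ^+ p + (z ^+ p)^-1 = z + z^-1.
  by rewrite -exprVn -frobD -hx -rmorphXn fermat.
have p0 : (0 < p)%N by apply: prime_gt0.
case: (inv_sum_eq (expf_neq0 _ nz) nz e) => h.
  left; apply: (mulIf nz); rewrite mul1r -exprSr prednK //.
by right; rewrite exprSr.
Qed.
End Frob.

End P6.
Import P6.

Module P7.

Local Open Scope ring_scope.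

Lemma quad_root (p : nat) (x : 'F_p) :
  exists (L : fieldType) (phi : {rmorphism 'F_p -> L}) (z : L), z != 0 /\ phi x = z + z^-1.
Proof.
pose P : {poly 'F_p} := 'X^2 + (- (x%:P * 'X) + 1).
have sP : size P = 3%N.
  rewrite /P size_polyDl ?size_polyXn //.
  apply: (leq_ltn_trans (size_polyD _ _)).
  rewrite size_polyN size_poly1.
  apply: (@leq_ltn_trans 2%N) => //.
  rewrite geq_max; apply/andP; split=> //.
  apply: (leq_trans (size_polyMleq _ _)); rewrite size_polyC size_polyX.
  by case: (x != 0).
have nzP : P != 0 by rewrite -size_poly_gt0 sP.
case: (FinSplittingFieldFor nzP) => L [rs Hrs _].
have srs : size rs = 2%N.
  have := eqp_size Hrs; rewrite size_prod_XsubC size_map_poly sP; by case.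
case: rs Hrs srs => [|r rs'] Hrs // _.
have rr : root (map_poly (in_alg L) P) r.
  by rewrite (eqp_root Hrs) root_prod_XsubC mem_head.
move: rr; rewrite /root /P !rmorphD rmorphN !rmorphM rmorph1 /= map_polyX map_polyC /=.
rewrite !hornerD hornerN !hornerM hornerX hornerC hornerC => /eqP hr0.
have hr : r * r + (- (x%:A * r) + 1) = 0 :> L by exact: hr0.
clear hr0.
have nr : r != 0.
  apply/eqP => r0; move: hr; rewrite r0 !mul0r mulr0 oppr0 !add0r => /eqP; rewrite oner_eq0.
  done.
exists L, (in_alg L), r; split=> //=.
apply: (mulIf nr); rewrite mulrDl mulVf //.
apply/eqP; rewrite eq_sym -subr_eq0; apply/eqP; rewrite -hr; ring.
Qed.

End P7.
Import P7.

Module P8.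

Local Open Scope ring_scope.

Lemma fixed_in_Fp (p : nat) (hp : prime p) (L : fieldType) (phi : {rmorphism 'F_p -> L}) (y : L) :
  y ^+ p = y -> exists x, phi x = y.
Proof.
move=> hy.
case/boolP: [exists x, phi x == y] => [/existsP [x /eqP <-]|nex]; first by exists x.
exfalso.
have p1 : (1 < p)%N by apply: prime_gt1.
pose P : {poly L} := 'X^p + (- 'X).
have sP : size P = p.+1.
  rewrite /P size_polyDl ?size_polyXn // size_polyN size_polyX; lia.
have nzP : P != 0 by rewrite -size_poly_gt0 sP.
have hall : all (root P) (y :: map phi (enum 'F_p)).
  apply/allP => t; rewrite inE => /orP [/eqP ->|/mapP [a _ ->]].
    by rewrite /root /P hornerD hornerN hornerXn hornerX hy subrr.
  by rewrite /root /P hornerD hornerN hornerXn hornerX -rmorphXn (fermat hp) subrr.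
have huniq : uniq (y :: map phi (enum 'F_p)).
  rewrite /= (map_inj_uniq (fmorph_inj phi)) enum_uniq andbT.
  apply/mapP => [[a _ ha]]; move/negP: nex; apply; apply/existsP; exists a; by rewrite ha.
have := @max_poly_roots _ P (y :: map phi (enum 'F_p)) nzP hall huniq.
by rewrite sP /= size_map -cardE card_Fp // ltnn.
Qed.

Section FF.
Variables (p : nat) (hp : prime p).
Lemma FF2 : exists (L : finFieldType) (phi : {rmorphism 'F_p -> L}), #|L| = (p ^ 2)%N.
Proof.
case: (pPrimePowerField hp (isT : (0 < 2)%N)) => Fm cFm card.
pose L := pPrimeCharType cFm.
exists (L : finFieldType), (in_alg L); done.
Qed.
End FF.

End P8.
Import P8.

Module P9.

Local Open Scope ring_scope.

Lemma elem_order (L : finFieldType) M : (M %| #|L|.-1)%N ->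
  exists w : L, w != 0 /\ forall m, (w ^+ m == 1) = (M %| m)%N.
Proof.
move=> hM.
have /cyclicP [g hg] := field_unit_group_cyclic [set: {unit L}]%G.
have og : #[g]%g = #|L|.-1 by rewrite -card_finField_unit /order -hg.
have og0 : (0 < #[g]%g)%N by apply: order_gt0.
rewrite -og in hM.
pose k := (#[g]%g %/ M)%N.
have hk : (k * M)%N = #[g]%g by rewrite divnK.
have k0 : (0 < k)%N by move: og0; rewrite -hk muln_gt0 => /andP [].
pose u := (g ^+ k)%g.
have ou : #[u]%g = M.
  rewrite /u orderXdiv; last by rewrite -hk dvdn_mulr.
  by rewrite -hk mulKn.
exists (val u); split.
  by rewrite -unitfE; exact: (valP u).
move=> m; rewrite -val_unitX -val_unit1 val_eqE -ou order_dvdn //.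
Qed.

End P9.
Import P9.

Module P10.

Lemma ceil_div_mono a a' b : a <= a' -> ceil_div a b <= ceil_div a' b.
Proof. by move=> h; rewrite /ceil_div leq_div2r // leq_add2r. Qed.

Lemma Bo_mono d o N : 0 < N -> o %| N -> Bo d o <= Bo d N.
Proof.
move=> N0 oN; rewrite /Bo; apply/bigmax_leqP_seq => q qin _.
apply: leq_trans (leq_bigmax_seq (F := fun q => ceil_div (logn q N) (logn q d)) _ qin isT).
by apply: ceil_div_mono; apply: dvdn_leq_log.
Qed.

Lemma Bo_le_tb p d N : prime p -> (N = p - 1 \/ N = p + 1) -> Bo d N <= tail_bound p d.
Proof.
move=> hp hN; rewrite /Bo /tail_bound; apply/bigmax_leqP_seq => q qin _.
apply: leq_trans (leq_bigmax_seq (F := fun q => maxn (ceil_div (logn q (p - 1)) (logn q d))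
          (ceil_div (logn q (p + 1)) (logn q d))) _ qin isT).
by case: hN => ->; [apply: leq_maxl | apply: leq_maxr].
Qed.

Lemma Bo_qpow d q v : q \in primes d -> Bo d (q ^ v) = ceil_div v (logn q d).
Proof.
move=> qin; have pq : prime q by move: qin; rewrite mem_primes => /andP [].
apply/eqP; rewrite eqn_leq; apply/andP; split.
  apply/bigmax_leqP_seq => r rin _.
  have pr : prime r by move: rin; rewrite mem_primes => /andP [].
  rewrite lognX logn_prime //.
  case: eqP => [->|_]; first by rewrite muln1.
  rewrite muln0 /ceil_div add0n divn_small //.
  have : 0 < logn r d by rewrite logn_gt0.
  lia.
have := leq_bigmax_seq (F := fun r => ceil_div (logn r (q ^ v)) (logn r d)) _ qin isT.
by rewrite lognX logn_prime // eqxx muln1.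
Qed.

Lemma max_arg (s : seq nat) (F : nat -> nat) : s != [::] ->
  exists2 i, i \in s & \max_(j <- s) F j = F i.
Proof.
elim: s => // a s IH _.
rewrite big_cons.
case: s IH => [|b s] IH.
  by exists a; rewrite ?mem_head // big_nil maxn0.
case: IH => // i iin ->.
case: (leqP (F i) (F a)) => h.
  by exists a; rewrite ?mem_head.
by exists i => //; rewrite inE iin orbT.
Qed.

End P10.
Import P10.

Module P11.

Lemma upper_bound p d (hp : prime p) (hd : 1 < d) (x : 'F_p) m :
  is_tail (cheb_map p d) x m -> m <= tail_bound p d.
Proof.
move=> ht.
have [L [phi [z [nz hx]]]] := quad_root x.
have p1 : 1 < p by apply: prime_gt1.
have [N [N0 [hN zN]]] : exists N, 0 < N /\ (N = p - 1 \/ N = p + 1) /\ (z ^+ N = 1)%R.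
  case: (frob_z hp nz hx) => h.
    by exists p.-1; split; [lia | split; [left; lia | done]].
  by exists p.+1; split; [lia | split; [right; lia | done]].
have [o [o0 ho]] := order_exists N0 zN.
rewrite (tail_uniq hd nz hx o0 ho ht).
apply: leq_trans (Bo_le_tb d hp hN).
apply: Bo_mono => //.
by rewrite -ho; apply/eqP.
Qed.

Lemma lower_N p d (hp : prime p) (hd : 1 < d) q N : q \in primes d ->
  (N = p - 1 \/ N = p + 1) ->
  exists x : 'F_p, is_tail (cheb_map p d) x (ceil_div (logn q N) (logn q d)).
Proof.
move=> qin hN.
have p1 : 1 < p by apply: prime_gt1.
have [L [phi cL]] := FF2 hp.
pose M := q ^ logn q N.
have MN : M %| N by rewrite /M -p_part dvdn_part.
have NL : N %| #|L|.-1.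
  rewrite cL -subn1 (_ : 1 = 1 ^ 2) // subn_sqr.
  by case: hN => ->; [rewrite dvdn_mulr | rewrite dvdn_mull].
have [w [nw ho]] := elem_order (dvdn_trans MN NL).
have wN : (w ^+ N = 1)%R by apply/eqP; rewrite ho.
have wp : (w ^+ p + (w ^+ p)^-1 = w + w^-1)%R.
  case: hN => hN; subst N.
    have -> : (w ^+ p = w)%R.
      by rewrite -{1}(subnK (ltnW p1)) exprD wN mul1r.
    done.
  have e : (w ^+ p = w^-1)%R.
    by apply: (mulIf nw); rewrite mulVf // -exprSr -addn1.
  by rewrite e invrK addrC.
have [x hx] : exists x, phi x = (w + w^-1)%R.
  apply: (fixed_in_Fp hp).
  by rewrite (frobD hp phi) exprVn wp.
exists x.
have M0 : 0 < M by rewrite expn_gt0 prime_gt0 //; move: qin; rewrite mem_primes => /andP [].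
have := tail_is_Bo hd nw hx M0 ho.
by rewrite /M Bo_qpow.
Qed.


End P11.
Import P11.

Theorem mainTheorem6 (p d : nat) (hp : prime p) (hd : 1 < d) :
  (exists x : 'F_p, is_tail (cheb_map p d) x (tail_bound p d)) /\
  (forall (x : 'F_p) (m : nat), is_tail (cheb_map p d) x m -> m <= tail_bound p d).
Proof.
split; last by move=> x m; apply: upper_bound.
have ne : primes d != [::].
  apply/eqP => h.
  have : pdiv d \in primes d by rewrite mem_primes pdiv_prime // pdiv_dvd andbT; lia.
  by rewrite h.
have [q qin eq] := max_arg (fun q => maxn (ceil_div (logn q (p - 1)) (logn q d))
          (ceil_div (logn q (p + 1)) (logn q d))) ne.
rewrite /tail_bound eq /=.
case: (leqP (ceil_div (logn q (p + 1)) (logn q d)) (ceil_div (logn q (p - 1)) (logn q d))) => _.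
  by apply: (lower_N hp hd qin); left.
by apply: (lower_N hp hd qin); right.
Qed.
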